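(* Let $k\ge3$ be an integer, $p>k+1$ a prime, and $l$ a positive integer with $(k+1)\nmid l$. Then the tuple $(1,2,\ldots,k)$, viewed as an element of $\mathbb{Z}_{p,l}^k$, is $(k,p,l)$-improper. Consequently, if $p>k+1$ and $I(k,p,l)=\emptyset$, then $(k+1)\mid l$.
   Context: For $x\in\mathbb{R}$, $\lVert x\rVert$ is the distance from $x$ to the nearest integer. $\mathbb{Z}_n$ denotes integers modulo $n$; $\mathbb{Z}_{p,l}:=\mathbb{Z}_{pl}\setminus p\mathbb{Z}_l$ (residues mod $pl$ not divisible by $p$). A tuple $\mathbf v\in\mathbb{Z}_{p,l}^k$ is $(k,p,l)$-proper if either there is an index $i$ with $\gcd(l,v_1,\ldots,v_{i-1},v_{i+1},\ldots,v_k)>1$, or there is $t\in\frac1{lp}\mathbb{Z}$ with $\lVert tv_j\rVert\ge\frac1{k+1}$ for all $j$; otherwise it is $(k,p,l)$-improper, and $I(k,p,l)$ is the set of improper tuples. *)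

(* Defs.v *)
From HB Require Import structures.
From mathcomp Require Import all_boot all_order all_algebra.
Unset Printing Implicit Defensive.
Import Order.TTheory GRing.Theory Num.Theory.
Local Open Scope ring_scope.

(* Residues mod (p*l) are represented by their least nonnegative representative. *)
Definition inZpl (p l x : nat) : bool := ((x < p * l) && ~~ (p %| x))%N.

Definition distZ (x : rat) : rat :=
  Num.min (x - (Num.floor x)%:~R) ((Num.floor x + 1)%:~R - x).

Definition gcd_omit (k l : nat) (v : 'I_k -> nat) (i : 'I_k) : nat :=
  gcdn l (\big[gcdn/0%N]_(j < k | j != i) v j).

Definition proper (k p l : nat) (v : 'I_k -> nat) : Prop :=
  (exists i : 'I_k, (1 < gcd_omit k l v i)%N)
  \/ (exists a : int, forall j : 'I_k,
        ((k.+1)%:R : rat)^-1 <= distZ (a%:~R / ((l * p)%N)%:R * (v j)%:R)).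

Definition improper (k p l : nat) (v : 'I_k -> nat) : Prop :=
  (forall j : 'I_k, inZpl p l (v j)) /\ ~ proper k p l v.

Definition tuple1k (k : nat) : 'I_k -> nat := fun j => (nat_of_ord j).+1.

(* Main.v *)
Require Import Defs.
From mathcomp Require Import all_boot all_order all_algebra.
From mathcomp Require Import zify ring.
Import Order.TTheory GRing.Theory Num.Theory.
Local Open Scope ring_scope.
Lemma arith (k:nat) (N ri rj rd ui uj b m : int): 0<N -> 0<=ri<N -> 0<=rj<N -> 0<=rd<N -> 0<=ui<N->0<=uj<N -> N <= (k.+1)%:Z*rd <= k%:Z*N -> (k.+1)%:Z*ri = b*N+ui -> (k.+1)%:Z*rj = b*N+uj -> rd - rj + ri = m*N -> False.
Proof.
move=> N0 h1 h2 h3 h4 h5 h6 h7 h8 Em.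
have g0 : (m <= -1) -> m * N <= - N.
  by move=> hm; have := @ler_wpM2r _ N (ltW N0) _ _ hm; rewrite mulN1r.
have g1 : (2 <= m) -> 2 * N <= m * N.
  move=> hm; exact: (@ler_wpM2r _ N (ltW N0) _ _ hm).
have : (m = 0) \/ (m = 1).
  case: (lerP m (-1)) => c1; first by move: (g0 c1); lia.
  case: (lerP 2 m) => c2; first by move: (g1 c2); lia.
  lia.
case=> Hm; subst m.
  have Erd : rd = rj - ri by lia.
  subst rd. lia.
have Erd : rd = rj - ri + N by lia.
subst rd; lia.
Qed.

Definition rr (N a : int) (x : nat) : int := ((a * x%:Z) %% N)%Z.

Lemma box_neq (k : nat) (N a : int) (i j : nat) :
  0 < N -> (i < j <= k)%N ->
  N <= (k.+1)%:Z * rr N a (j - i)%N <= k%:Z * N ->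
  (((k.+1)%:Z * rr N a i) %/ N)%Z != (((k.+1)%:Z * rr N a j) %/ N)%Z.
Proof.
move=> N0 hij hd; apply/negP => /eqP E.
have ej : a * j%:Z = a * i%:Z + a * (j - i)%N%:Z.
  rewrite -mulrDr; congr (_ * _); lia.
apply: (@arith k N (rr N a i) (rr N a j) (rr N a (j-i)) (((k.+1)%:Z * rr N a i) %% N)%Z
   (((k.+1)%:Z * rr N a j) %% N)%Z (((k.+1)%:Z * rr N a i) %/ N)%Z
   (((a * j%:Z) %/ N)%Z - ((a * i%:Z) %/ N)%Z - ((a * (j - i)%N%:Z) %/ N)%Z)) => //;
  rewrite /rr in hd E *; try lia.
Qed.

Lemma box_bound (k : nat) (N a : int) (x : nat) : 0 < N ->
  0 <= (((k.+1)%:Z * rr N a x) %/ N)%Z <= k%:Z.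
Proof.
move=> N0; rewrite /rr.
have h : 0 <= ((a * x%:Z) %% N)%Z < N by lia.
move: h; move: ((a * x%:Z) %% N)%Z => r h.
have h2 : (k.+1)%:Z * r < (k.+1)%:Z * N.
  by rewrite ltr_pM2l //; case/andP: h.
have h3 : 0 <= (k.+1)%:Z * r by apply: mulr_ge0 => //; case/andP: h.
move: h2 h3; move: ((k.+1)%:Z * r) => y h2 h3.
have e1 : y = (y %/ N)%Z * N + (y %% N)%Z by lia.
have e2 : 0 <= (y %% N)%Z < N by lia.
move: e1 e2; move: (y %/ N)%Z (y %% N)%Z => q u e1 e2.
have g0 : (q <= -1) -> q * N <= - N.
  by move=> hm; have := @ler_wpM2r _ N (ltW N0) _ _ hm; rewrite mulN1r.
have g1 : (k.+1%:Z <= q) -> k.+1%:Z * N <= q * N.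
  move=> hm; exact: (@ler_wpM2r _ N (ltW N0) _ _ hm).
case: (lerP q (-1)) => c1; first by move: (g0 c1); lia.
case: (lerP (k.+1%:Z) q) => c2; first by move: (g1 c2); lia.
lia.
Qed.

Lemma pigeon (k : nat) (N a : int) : 0 < N -> (0 < k)%N ->
 (forall x : nat, (0 < x <= k)%N -> N <= (k.+1)%:Z * rr N a x <= k%:Z * N) ->
 exists2 j : nat, (0 < j <= k)%N & (k.+1)%:Z * rr N a j = k%:Z * N.
Proof.
move=> N0 k0 H.
pose q (x : nat) := (((k.+1)%:Z * rr N a x) %/ N)%Z.
have qb : forall x, 0 <= q x <= k%:Z by move=> x; exact: box_bound.
have qn : forall x, (absz (q x) < k.+1)%N by move=> x; move: (qb x); lia.
pose f (x : 'I_k.+1) : 'I_k.+1 := Ordinal (qn x).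
have finj : injective f.
  move=> x y /(congr1 val) /= e.
  have e' : q x = q y by move: (qb x) (qb y) e; lia.
  apply/val_inj/eqP; apply/negP => /negP ne.
  case: (ltngtP x y) ne => // c _.
    have hc : (x < y <= k)%N by move: (ltn_ord y) c; lia.
    have hd : (0 < y - x <= k)%N by move: hc; lia.
    have := @box_neq k N a x y N0 hc (H _ hd); rewrite /q in e'.
    by rewrite e' eqxx.
  have hc : (y < x <= k)%N by move: (ltn_ord x) c; lia.
  have hd : (0 < x - y <= k)%N by move: hc; lia.
    have := @box_neq k N a y x N0 hc (H _ hd); rewrite /q in e'.
  by rewrite e' eqxx.
have := injF_onto finj ord_max.
case/codomP => x /(congr1 val) /= ex.
have r0 : rr N a 0 = 0 by rewrite /rr mulr0 mod0z.
have xpos : (0 < x)%N.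
  case: (posnP x) ex => // x0; rewrite /q x0 r0 mulr0 div0z /=; lia.
have hx : (0 < x <= k)%N by move: (ltn_ord x) xpos; lia.
exists x => //.
have eq : q x = k%:Z by move: (qb x) ex; lia.
move: (H x hx) eq; rewrite /q.
move: ((k.+1)%:Z * rr N a x) => y hy eq.
have e1 : y = (y %/ N)%Z * N + (y %% N)%Z by lia.
have e2 : 0 <= (y %% N)%Z by lia.
rewrite eq in e1; lia.
Qed.

Lemma dist_cond (Nn : nat) (a : int) (j k : nat) : (0 < Nn)%N ->
  ((k.+1)%:R : rat)^-1 <= distZ (a%:~R / Nn%:R * j%:R) ->
  Nn%:Z <= (k.+1)%:Z * rr Nn a j <= k%:Z * Nn%:Z.
Proof.
move=> N0.
set q := ((a * j%:Z) %/ Nn%:Z)%Z.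
set r := rr Nn a j.
have ez : a * j%:Z = q * Nn%:Z + r by rewrite /q /r /rr; lia.
have rb : 0 <= r < Nn%:Z by rewrite /r /rr; lia.
have Np : 0 < (Nn%:R : rat) by rewrite ltr0n.
have ex : a%:~R / Nn%:R * j%:R = q%:~R + r%:~R / (Nn%:R : rat).
  have e' : (a%:~R * j%:R : rat) = q%:~R * Nn%:R + r%:~R.
    by have := congr1 (fun z : int => z%:~R : rat) ez; rewrite /= intrM intrD intrM.
  rewrite mulrAC e'; field; exact: lt0r_neq0.
have rN0 : 0 <= r%:~R / (Nn%:R : rat).
  by apply: divr_ge0; [rewrite ler0z; case/andP: rb | exact: ltW].
have rN1 : r%:~R / (Nn%:R : rat) < 1.
  by rewrite ltr_pdivrMr // mul1r (_ : Nn%:R = (Nn%:Z)%:~R) // ltr_int; case/andP: rb.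
have fl : Num.floor (a%:~R / Nn%:R * j%:R : rat) = q.
  apply/eqP; rewrite floor_eq ex intrD lerDl rN0 /= ltrD2l //.
rewrite /distZ fl ex le_min intrD.
set y := r%:~R / (Nn%:R : rat).
have -> : q%:~R + y - q%:~R = y by ring.
have -> : q%:~R + 1 - (q%:~R + y) = 1 - y by ring.
have key : forall u : int, ((k.+1)%:R : rat)^-1 <= u%:~R / Nn%:R -> Nn%:Z <= u * (k.+1)%:Z.
  move=> u; rewrite -div1r ler_pdivlMr // mulrAC mul1r ler_pdivrMr ?ltr0n // => h.
  by rewrite -(ler_int rat) intrM.
have -> : 1 - y = (Nn%:Z - r)%:~R / Nn%:R.
  rewrite /y intrD intrN; change ((Nn%:Z)%:~R) with (Nn%:R : rat); field; exact: lt0r_neq0.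
move/andP=> [/key h1 /key h2]; lia.
Qed.

Lemma divK (k p l : nat) (a : int) : (3 <= k)%N -> prime p -> (k.+1 < p)%N -> (0 < l)%N ->
  (forall j : 'I_k, ((k.+1)%:R : rat)^-1 <=
        distZ (a%:~R / ((l * p)%N)%:R * (tuple1k k j)%:R)) ->
  (k.+1 %| l)%N.
Proof.
move=> k3 pp kp l0 Ha.
have p0 : (0 < p)%N by apply: prime_gt0.
have N0 : (0 < l * p)%N by rewrite muln_gt0 l0.
have H : forall x : nat, (0 < x <= k)%N ->
    (l * p)%N%:Z <= (k.+1)%:Z * rr (l * p)%N a x <= k%:Z * (l * p)%N%:Z.
  move=> x hx.
  have hx' : (x.-1 < k)%N by lia.
  apply: dist_cond => //.
  have := Ha (Ordinal hx'); rewrite /tuple1k /=.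
  by have -> : x.-1.+1 = x by lia.
have Nz : 0 < (l * p)%N%:Z by lia.
have k0 : (0 < k)%N by lia.
have [j hj ej] := @pigeon k (l * p)%N%:Z a Nz k0 H.
have rb : 0 <= rr (l * p)%N a j by rewrite /rr; lia.
have en : (k.+1 * `|rr (l * p)%N a j| = k * (l * p))%N by lia.
have d1 : (k.+1 %| k * (l * p))%N by rewrite -en dvdn_mulr.
rewrite Gauss_dvdr ?coprimeSn // in d1.
have cp : coprime k.+1 p.
  rewrite coprime_sym prime_coprime //; apply/negP => /dvdn_leq; lia.
by rewrite Gauss_dvdl in d1.
Qed.

Lemma part1 (k p l : nat) : (3 <= k)%N -> prime p -> (k.+1 < p)%N -> (0 < l)%N ->
  ~~ (k.+1 %| l)%N -> improper k p l (tuple1k k).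
Proof.
move=> k3 pp kp l0 nd.
have p0 : (0 < p)%N by apply: prime_gt0.
split.
  move=> j; rewrite /inZpl /tuple1k.
  have jk := ltn_ord j.
  apply/andP; split.
    by apply: (@leq_trans p); [lia | rewrite leq_pmulr].
  by apply/negP => /dvdn_leq; lia.
case.
  move=> [i Hi]; move: Hi; rewrite /gcd_omit.
  set X := \big[gcdn/0]_(j < k | j != i) tuple1k k j.
  suff : (X %| 1)%N.
    move=> hX; have : (gcdn l X %| 1)%N by apply: dvdn_trans hX; exact: dvdn_gcdr.
    by rewrite dvdn1 => /eqP ->.
  have h0 : (0 < k)%N by lia.
  have h1 : (1 < k)%N by lia.
  have h2 : (2 < k)%N by lia.
  case: (eqVneq i (Ordinal h0)) => ei.
    have d2 : (X %| 2)%N by apply: (biggcdn_inf (Ordinal h1)) => //; rewrite ei.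
    have d3 : (X %| 3)%N by apply: (biggcdn_inf (Ordinal h2)) => //; rewrite ei.
    by have := dvdn_sub d3 d2.
  by apply: (biggcdn_inf (Ordinal h0)) => //; rewrite eq_sym.
move=> [a Ha].
by move: nd; rewrite (@divK k p l a k3 pp kp l0 Ha).
Qed.

Theorem mainTheorem7 (k p l : nat) :
  (3 <= k)%N -> prime p -> (k.+1 < p)%N -> (0 < l)%N ->
  (~~ (k.+1 %| l)%N -> improper k p l (tuple1k k))
  /\ ((forall v : 'I_k -> nat, ~ improper k p l v) -> (k.+1 %| l)%N).
Proof.
move=> k3 pp kp l0; split; first exact: part1.
move=> H; case E : (k.+1 %| l)%N => //.
by case: (H _ (@part1 k p l k3 pp kp l0 (negbT E))).
Qed.
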